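(* Every finite solvable group all of whose Sylow subgroups are abelian is an IYB group, i.e. it is isomorphic to the multiplicative group $(B,\cdot)$ of some finite left brace $(B,+,\cdot)$.
   Context: A left brace is a set $B$ with two binary operations $+$ and $\cdot$ such that $(B,+)$ is an abelian group, $(B,\cdot)$ is a group, and $a\cdot(b+c)+a=a\cdot b+a\cdot c$ for all $a,b,c\in B$. A group is called an IYB group if it is isomorphic to the multiplicative group of a finite left brace. *)

(* Defs.v *)
From mathcomp Require Import all_boot all_fingroup all_solvable.
Set Implicit Arguments. Unset Strict Implicit. Unset Printing Implicit Defensive.

Record left_brace (T : finType) := LeftBrace {
  badd : T -> T -> T; bzero : T; bneg : T -> T;
  bmul : T -> T -> T; bone : T; binv : T -> T;
  baddA : associative badd;
  baddC : commutative badd;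
  badd0 : left_id bzero badd;
  baddN : left_inverse bzero bneg badd;
  bmulA : associative bmul;
  bmul1 : left_id bone bmul;
  bmulV : left_inverse bone binv bmul;
  bbrace : forall a b c : T,
      badd (bmul a (badd b c)) a = badd (bmul a b) (bmul a c)
}.

Definition IYB_group (gT : finGroupType) (G : {group gT}) : Prop :=
  exists (T : finType) (B : left_brace T) (f : T -> gT),
    [/\ injective f, f @: [set: T] = G &
        forall a b : T, f (bmul B a b) = (f a * f b)%g].

(* Main.v *)
Require Import Defs.
From mathcomp Require Import all_boot all_fingroup all_solvable.

Module Helpers.
Set Implicit Arguments. Unset Strict Implicit. Unset Printing Implicit Defensive.
Local Open Scope group_scope.
Section Brace.
Variables (gT : finGroupType) (A H : {group gT}).
Hypotheses (nAH : H \subset 'N(A)) (abA : abelian A) (tiAH : A :&: H = 1).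
Variables (T : finType) (B : left_brace T) (f : T -> gT).
Hypotheses (finj : injective f) (fim : f @: [set: T] = H)
   (fM : forall a b, f (bmul B a b) = f a * f b).

Let fH t : f t \in H. Proof. by rewrite -fim imset_f ?inE. Qed.

Let f1 : f (bone B) = 1.
Proof. by apply: (mulgI (f (bone B))); rewrite -fM bmul1 mulg1. Qed.

Let fV t : f (binv B t) = (f t)^-1.
Proof. by apply: (mulIg (f t)); rewrite -fM bmulV f1 mulVg. Qed.

Let actm t : (f t)^-1 \in 'N(A).
Proof. by rewrite groupV; apply: (subsetP nAH). Qed.

Definition act (t : T) (a : [subg A]) : [subg A] := subg A (sgval a ^ (f t)^-1).

Let actE t a : sgval (act t a) = sgval a ^ (f t)^-1.
Proof. by rewrite subgK // memJ_norm ?subgP. Qed.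

Let sgM (a b : [subg A]) : sgval (a * b) = sgval a * sgval b.
Proof. by rewrite sgvalM ?inE. Qed.

Let sg_inj : injective (@sgval gT A).
Proof. by move=> x y; apply: val_inj. Qed.

Let subgC (a b : [subg A]) : a * b = b * a.
Proof. by apply: sg_inj; rewrite !sgM; apply: (centsP abA); apply: subgP. Qed.

Let actM t a b : act t (a * b) = act t a * act t b.
Proof. by apply: sg_inj; rewrite sgM !actE sgM conjMg. Qed.

Let actA t k c : act t (act k c) = act (bmul B t k) c.
Proof. by apply: sg_inj; rewrite !actE -conjgM fM invMg. Qed.

Let act1 a : act (bone B) a = a.
Proof. by apply: sg_inj; rewrite actE f1 invg1 conjg1. Qed.

Let act_one t : act t 1 = 1.
Proof. by apply: sg_inj; rewrite actE; apply: conj1g. Qed.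

Definition Tb : finType := ([subg A] * T)%type.
Definition addb (x y : Tb) : Tb := (x.1 * y.1, badd B x.2 y.2).
Definition negb' (x : Tb) : Tb := (x.1^-1, bneg B x.2).
Definition mulb (x y : Tb) : Tb := (x.1 * act x.2 y.1, bmul B x.2 y.2).
Definition invb (x : Tb) : Tb := (act (binv B x.2) x.1^-1, binv B x.2).

Lemma addbA : associative addb.
Proof. by move=> [a h] [b k] [c l]; rewrite /addb /= mulgA baddA. Qed.
Lemma addbC : commutative addb.
Proof. by move=> [a h] [b k]; rewrite /addb /= subgC baddC. Qed.
Lemma addb0 : left_id (1, bzero B) addb.
Proof. by move=> [a h]; rewrite /addb /= mul1g badd0. Qed.
Lemma addbN : left_inverse (1, bzero B) negb' addb.
Proof. by move=> [a h]; rewrite /addb /= mulVg baddN. Qed.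
Lemma mulbA : associative mulb.
Proof. by move=> [a h] [b k] [c l]; rewrite /mulb /= actM actA !mulgA bmulA. Qed.
Lemma mulb1 : left_id (1, bone B) mulb.
Proof. by move=> [a h]; rewrite /mulb /= act1 mul1g bmul1. Qed.
Lemma mulbV : left_inverse (1, bone B) invb mulb.
Proof. by move=> [a h]; rewrite /mulb /invb /= -actM mulVg act_one bmulV. Qed.
Lemma braceb : forall a b c : Tb, addb (mulb a (addb b c)) a = addb (mulb a b) (mulb a c).
Proof.
move=> [a h] [b k] [c l]; rewrite /mulb /addb /= bbrace actM; congr (_, _).
by rewrite -!mulgA; congr (_ * _); rewrite [act h c * a]subgC !mulgA.
Qed.

Definition braceB : left_brace Tb :=
  LeftBrace addbA addbC addb0 addbN mulbA mulb1 mulbV braceb.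

Definition fb (x : Tb) : gT := sgval x.1 * f x.2.

Lemma fbM x y : fb (mulb x y) = fb x * fb y.
Proof.
case: x y => [a h] [b k]; rewrite /fb /mulb sgM actE fM.
by rewrite conjgE invgK !mulgA mulgKV.
Qed.

Lemma fb_inj : injective fb.
Proof.
move=> [a h] [b k]; rewrite /fb /= => E.
have E2 : (sgval b)^-1 * sgval a = f k * (f h)^-1.
  by rewrite -(mulgK (f h) (sgval a)) E -mulgA mulKg.
have : (sgval b)^-1 * sgval a \in A :&: H.
  by rewrite inE groupM ?groupV ?subgP //= E2 groupM ?groupV ?fH.
rewrite tiAH inE => /eqP E1.
have eab : sgval a = sgval b by apply: (mulgI (sgval b)^-1); rewrite E1 mulVg.
have eab' : a = b by apply: sg_inj.
subst b; congr (_, _); apply: finj; exact: (mulgI (sgval a)).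
Qed.

Lemma fb_im : fb @: [set: Tb] = A * H.
Proof.
apply/setP=> x; apply/imsetP/mulsgP => [[[a h] _ ->] | [y z Ay Hz ->]].
  by exists (sgval a) (f h); rewrite ?subgP ?fH.
have : z \in f @: [set: T] by rewrite fim.
case/imsetP=> t _ ->; exists (subg A y, t); rewrite ?inE //.
by rewrite /fb /= subgK.
Qed.

End Brace.

Lemma IYB_sdprod (gT : finGroupType) (G A H : {group gT}) :
  A <| G -> abelian A -> A :&: H = 1 -> A * H = G -> IYB_group H -> IYB_group G.
Proof.
move=> nsAG abA tiAH defG [T [B [f [finj fim fM]]]].
have nAH : H \subset 'N(A).
  by apply: subset_trans (normal_norm nsAG); rewrite -defG mulG_subr.
exists (Tb A T), (braceB nAH abA fim fM), (@fb _ A _ f); split.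
- exact: (fb_inj tiAH finj fim).
- by rewrite (@fb_im _ A H T f fim) defG.
- exact: (fbM nAH fim fM).
Qed.

Lemma IYB_trivial (gT : finGroupType) (G : {group gT}) : G :=: 1 -> IYB_group G.
Proof.
move=> G1.
have tt1 : forall x y : unit, x = y by case; case.
exists unit, (@LeftBrace unit (fun _ _ => tt) tt (fun _ => tt) (fun _ _ => tt) tt (fun _ => tt)
  (fun _ _ _ => tt1 _ _) (fun _ _ => tt1 _ _) (fun _ => tt1 _ _) (fun _ => tt1 _ _)
  (fun _ _ _ => tt1 _ _) (fun _ => tt1 _ _) (fun _ => tt1 _ _) (fun _ _ _ => tt1 _ _)), (fun _ => 1).
split.
- by move=> [] [].
- by rewrite G1; apply/setP=> x; rewrite !inE; apply/imsetP/idP => [[? _ ->]|/eqP ->] //; exists tt.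
- by move=> _ _ /=; rewrite mulg1.
Qed.
Section Fusion.
Variables (gT : finGroupType) (G P : {group gT}) (p : nat).
Hypotheses (sylP : p.-Sylow(G) P) (abP : abelian P).

Lemma abelian_sub_cent1 v : v \in P -> P \subset 'C[v].
Proof. by move=> Pv; rewrite sub_cent1 (subsetP abP). Qed.

Lemma burnside_fusion u x : u \in P -> x \in G -> u ^ x \in P ->
  exists2 a, a \in 'N_G(P) & u ^ x = u ^ a.
Proof.
move=> Pu Gx Pux.
have sPG : P \subset G by case/and3P: sylP.
pose C := 'C_G[u ^ x].
have sCG : C \subset G by apply: subsetIl.
have sPC : P \subset C by rewrite subsetI sPG abelian_sub_cent1.
have sPxC : P :^ x \subset C.
  rewrite subsetI; apply/andP; split; first by rewrite -(conjGid Gx) conjSg.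
  by rewrite cent1J conjSg abelian_sub_cent1.
have sylPC : p.-Sylow(C) P by apply: pHall_subl sylP.
have sylPxC : p.-Sylow(C) (P :^ x)%G.
  by apply: pHall_subl sPxC sCG _; rewrite pHallJ.
have [c Cc defPx] := Sylow_trans sylPC sylPxC.
have [Gc cuc] : c \in G /\ c \in 'C[u ^ x] by apply/setIP.
exists (x * c^-1).
  rewrite inE groupM ?groupV //; apply/normP.
  by rewrite conjsgM /= defPx conjsgK.
by rewrite conjgM [_ ^ c^-1]conjgE invgK mulgA (cent1P cuc) mulgK.
Qed.
End Fusion.

Section Focal.
Variables (gT : finGroupType) (G P : {group gT}) (p : nat).
Hypotheses (sylP : p.-Sylow(G) P) (abP : abelian P).

Lemma focal_abelian : P :&: G^`(1) \subset [~: P, 'N_G(P)].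
Proof.
set R := [~: P, 'N_G(P)].
have sPG : P \subset G := pHall_sub sylP.
have nRP : P \subset 'N(R) := commg_norml P _.
pose alpha := restrm nRP (coset R).
have abelA : abelian (alpha @* P).
  by rewrite restrm_quotientE // quotient_abelian.
pose tr := transfer_morphism G abelA.
have trG' : {in G^`(1), forall g, transfer G abelA g = 0%R}.
  move=> g G'g.
  have : tr g \in tr @* G^`(1) by rewrite mem_morphim // (subsetP (der_sub 1 G)).
  rewrite morphim_der // (derG1P _) ?inE => [/eqP //|].
  apply/centsP => a _ b _; exact: Algebra.addrC.
apply/subsetP => g /setIP[Pg G'g].
have Gg : g \in G := subsetP sPG g Pg.
have trX := transversalP (rcosets_cycle_partition sPG Gg).
have := transfer_cycle_expansion sPG abelA Gg trX.
rewrite trG' //.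
have Ag : alpha g \in alpha @* P by rewrite mem_morphim.
set c := FiniteModule.fmod abelA (alpha g).
rewrite (eq_bigr (fun x => c *+ #|<[g]> : P :* x|)%R); last first.
  move=> x /(subsetP (transversal_sub trX)) Gx.
  set m := #|<[g]> : P :* x|.
  have Pv : g ^+ m ^ x^-1 \in P.
    have := mulg_exp_card_rcosets P g x; rewrite -/m mem_rcoset.
    by rewrite conjgE invgK mulgA.
  have [a Na ->] := burnside_fusion sylP abP (groupX m Pg) (groupVr Gx) Pv.
  change (FiniteModule.fmod abelA (coset R (g ^+ m ^ a)) = (c *+ m)%R).
  rewrite conjg_mulR coset_kerr; last by rewrite mem_commg ?groupX.
  rewrite morphX; last by rewrite (subsetP nRP).
  by rewrite FiniteModule.fmodX.
rewrite Algebra.sumrMnr (sum_index_rcosets_cycle sPG Gg trX) => /esym c0.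
have [_ pP p'iP] := and3P sylP.
set k := #|G : P| in c0 p'iP.
rewrite /c -FiniteModule.fmodX // in c0.
have := FiniteModule.fmodK abelA (groupX k Ag); rewrite c0 FiniteModule.fmval0.
change (1 = coset R g ^+ k -> g \in R) => /esym gk1.
have gkR : g ^+ k \in R.
  apply: coset_idr; first by rewrite groupX ?(subsetP nRP).
  by rewrite morphX ?(subsetP nRP).
have co : coprime #|<[g]>| k.
  by apply: (pnat_coprime _ p'iP); apply: pgroupS pP; rewrite cycle_subG.
by rewrite -(expgK co (cycle_id g)) groupX.
Qed.
End Focal.

Section KeySplit.
Variables (gT : finGroupType) (G P : {group gT}) (p : nat).
Hypotheses (sylP : p.-Sylow(G) P) (abP : abelian P).

Lemma key_split : exists C : {group gT}, (P :&: G^`(1)) \x C = P.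
Proof.
have sPG : P \subset G := pHall_sub sylP.
set N := 'N_G(P).
have sPN : P \subset N by rewrite subsetI sPG normG.
have sylPN : p.-Sylow(N) P by apply: pHall_subl sPN (subsetIl _ _) sylP.
have nsPN : P <| N by rewrite /normal sPN subsetIr.
have /splitsP[K /complP[tiPK defPK0]] :=
  SchurZassenhaus_split (pHall_Hall sylPN) nsPN.
have nPK0 : K \subset 'N(P).
  by apply: subset_trans (subsetIr G _); rewrite -defPK0 mulG_subr.
have defN : P ><| K = N by rewrite sdprodE.
have co : coprime #|P| #|K| by rewrite (coprime_sdprod_Hall_l defN) (pHall_Hall sylPN).
have [_ defPK nPK _] := sdprodP defN.
have sKN : K \subset N by apply: subset_trans (mulG_subr P K) _; rewrite defPK0.
set RK := [~: P, K].
have eqR : [~: P, N] = RK.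
  apply/eqP; rewrite eqEsubset (commgS P sKN) andbT.
  rewrite gen_subG; apply/subsetP => _ /imset2P[x a Px Na ->].
  have : a \in P * K by rewrite defPK0.
  case/mulsgP => y k Py Kk ->.
  rewrite commgMJ.
  have /commgP/eqP-> : commute x y by apply: (centsP abP).
  by rewrite conj1g mulg1 mem_commg.
have sRKP : RK \subset P by rewrite commg_subl.
have tiR : 'C_RK(K) = 1 := coprime_abel_cent_TI nPK co abP.
have qc := coprime_quotient_cent sRKP (commg_normr K P) co (abelian_sol abP).
have eqq : 'C_P(K) / RK = P / RK.
  by rewrite qc; apply/setIidPl; apply: quotient_cents2r.
have sPRC : P \subset RK * 'C_P(K).
  by rewrite -quotientSK ?commg_norml // eqq.
have eqG' : P :&: G^`(1) = RK.
  rewrite -eqR; apply/eqP; rewrite eqEsubset (focal_abelian sylP abP) subsetI.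
  by rewrite commg_subl subsetIr derg1 (commgSS sPG (subsetIl _ _)).
exists 'C_P(K)%G; rewrite eqG' dprodE.
- apply/eqP; rewrite eqEsubset sPRC andbT mul_subG ?subsetIl //.
- apply: subset_trans (subsetIl _ _) _; apply: subset_trans abP _; exact: centS.
- by rewrite setIA (setIidPl sRKP).
Qed.
End KeySplit.

Lemma chain_split (gT : finGroupType) (G P : {group gT}) p :
  p.-Sylow(G) P -> abelian P ->
  forall i, exists C : {group gT}, (P :&: G^`(i)) \x C = P.
Proof.
move=> sylP abP; have sPG : P \subset G := pHall_sub sylP.
elim=> [|i [C D2]].
  by exists 1%G; rewrite derg0 (setIidPl sPG) dprodg1.
have sylPi : p.-Sylow(G^`(i)) (G^`(i) :&: P) := Sylow_setI_normal (der_normal i G) sylP.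
have abPi : abelian (G^`(i) :&: P) := abelianS (subsetIr _ _) abP.
have [C' D1] := key_split sylPi abPi.
have eA : (G^`(i) :&: P) :&: (G^`(i))^`(1) = P :&: G^`(i.+1).
  rewrite -setIA (setIC P) setIA; congr (_ :&: _).
  by apply/setIidPr; apply: der_subS.
have {}D1 : (P :&: G^`(i.+1)) \x C' = P :&: G^`(i).
  by rewrite -eA [P :&: G^`(i)]setIC.
have [_ defAi _ _] := dprodP D1.
have [_ _ cCAi tiAiC] := dprodP D2.
have sC'Ai : C' \subset P :&: G^`(i) by rewrite -defAi mulG_subr.
have cCC' : C \subset 'C(C') := subset_trans cCAi (centS sC'Ai).
have tiC'C : C' :&: C = 1.
  by apply/trivgP; rewrite -tiAiC setSI.
exists (C' <*> C)%G; rewrite /= -dprodEY // dprodA D1 D2 //.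
Qed.

Lemma exists_split (gT : finGroupType) (G : {group gT}) :
  solvable G -> (forall (p : nat) (P : {group gT}), p.-Sylow(G) P -> abelian P) ->
  G :!=: 1 ->
  exists A H : {group gT}, [/\ A <| G, abelian A, A :!=: 1, A :&: H = 1 & A * H = G].
Proof.
move=> solG abS ntG.
have exP : exists n, G^`(n) == 1 by case/derivedP: solG => n Gn; exists n; apply/eqP.
case: (ex_minnP exP) => m /eqP Gm1 minm.
case: m Gm1 minm => [|k] Gk1 mink.
  by move: ntG; rewrite -(derg0 G) Gk1 eqxx.
set D := G^`(k).
have ntD : D :!=: 1.
  by apply/negP => /eqP D1; have := mink k; rewrite -/D D1 eqxx ltnn => /(_ isT).
have abD : abelian D by apply/derG1P; rewrite /D derg1 -dergSn.
have [D1 | [p pr_p pD]] := trivgVpdiv D; first by move/eqP: D1; rewrite (negPf ntD).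
have [P sylP] := Sylow_exists p G.
have sPG : P \subset G := pHall_sub sylP.
have abP := abS p P sylP.
have sylD : p.-Sylow(D) (D :&: P) := Sylow_setI_normal (der_normal k G) sylP.
have hallO : p.-Hall(D) 'O_p(D) := nilpotent_pcore_Hall p (abelian_nil abD).
have eqA : 'O_p(D) = D :&: P.
  apply/eqP; rewrite eqEcard (pcore_sub_Hall sylD) (card_Hall hallO) /=.
  by rewrite (card_Hall sylD).
set A := 'O_p(D)%G.
have nsAG : A <| G := char_normal_trans (pcore_char p D) (der_normal k G).
have abA : abelian A := abelianS (pcore_sub p D) abD.
have ntA : A :!=: 1.
  rewrite -cardG_gt1 (card_Hall hallO) p_part_gt1 mem_primes pr_p cardG_gt0.
  exact: pD.
have sAP : A \subset P by rewrite /= eqA subsetIr.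
have [C DC] := chain_split sylP abP k.
rewrite -/D setIC -eqA in DC.
have [_ defAC _ tiAC] := dprodP DC.
have [_ pP p'iP] := and3P sylP.
have coA : coprime #|A| #|G : P| := pnat_coprime (pcore_pgroup p D) p'iP.
have : [splits G, over A].
  rewrite (Gaschutz_split nsAG sAP sPG abA coA).
  by apply/splitsP; exists C; apply/complP.
case/splitsP => H /complP[tiAH defAH].
by exists A, H.
Qed.

Lemma main_ind n (gT : finGroupType) (G : {group gT}) :
  #|G| < n -> solvable G ->
  (forall (p : nat) (P : {group gT}), p.-Sylow(G) P -> abelian P) ->
  IYB_group G.
Proof.
elim: n gT G => // n IHn gT G /ltnSE leGn solG abS.
have [G1 | ntG] := eqVneq (G :> {set gT}) 1; first exact: IYB_trivial.
have [A [H [nsAG abA ntA tiAH defAH]]] := exists_split solG abS ntG.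
apply: (IYB_sdprod nsAG abA tiAH defAH).
have sHG : H \subset G by rewrite -defAH mulG_subr.
apply: IHn.
- apply: leq_trans leGn; rewrite -defAH (TI_cardMg tiAH) ltn_Pmull //.
  by rewrite cardG_gt1.
- exact: solvableS solG.
- move=> q Q sylQ.
  have [P sylP sQP] := Sylow_superset (subset_trans (pHall_sub sylQ) sHG) (pHall_pgroup sylQ).
  exact: abelianS sQP (abS q P sylP).
Qed.

End Helpers.

Theorem theorem2p1 (gT : finGroupType) (G : {group gT}) :
  solvable G ->
  (forall (p : nat) (P : {group gT}), (p.-Sylow(G) P)%g -> abelian P) ->
  IYB_group G.
Proof.
move=> solG abS; exact: (Helpers.main_ind (ltnSn #|G|) solG abS).
Qed.
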